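(* Let $T$ be an $n\times n$ complex matrix with distinct eigenvalues $\lambda_1,\dots,\lambda_n$. Let $u_1,\dots,u_n$ be unit eigenvectors of $T$ with $Tu_i=\lambda_iu_i$, let $v_1,\dots,v_n$ be unit eigenvectors of $T^*$ with $T^*v_i=\overline{\lambda_i}v_i$, and let $U=(u_1|u_2|\cdots|u_n)$ and $V=(v_1|v_2|\cdots|v_n)$ be the matrices with these vectors as columns. If $T$ is unitarily equivalent to a complex symmetric matrix, then $U^*U$ and $V^*V$ have the same eigenvalues, repeated according to multiplicity.
   Context: A complex symmetric matrix is a square complex matrix $S$ with $S=S^t$. Two matrices $A,B\in M_n(\mathbb{C})$ are unitarily equivalent if $A=W^*BW$ for some unitary $W$. *)

(* Defs.v *)
(* Complex numbers: an arbitrary numClosedFieldType C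
   (e.g. algC, or R[i] for R : realType), with conjugation Num.conj. *)
From HB Require Import structures.
From mathcomp Require Import all_boot all_order all_algebra.
Set Implicit Arguments. Unset Strict Implicit. Unset Printing Implicit Defensive.
Import Order.TTheory GRing.Theory Num.Theory.
Local Open Scope ring_scope.

Definition mxadj (C : numClosedFieldType) (m n : nat) (A : 'M[C]_(m, n))
  : 'M[C]_(n, m) := (map_mx Num.conj A)^T.

Definition unitary_mx (C : numClosedFieldType) (n : nat) (W : 'M[C]_n) : Prop :=
  mxadj W *m W = 1%:M.

Definition csymmetric (C : numClosedFieldType) (n : nat) (S : 'M[C]_n) : Prop :=
  S^T = S.

Definition unitarily_equiv (C : numClosedFieldType) (n : nat) (A B : 'M[C]_n) : Prop :=
  exists W : 'M[C]_n, unitary_mx W /\ A = mxadj W *m B *m W.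

Definition unit_col (C : numClosedFieldType) (n : nat) (U : 'M[C]_n) (j : 'I_n) : Prop :=
  \sum_(k < n) `|U k j| ^+ 2 = 1.

(* Main.v *)
Require Import Defs.
From mathcomp Require Import all_boot all_order all_algebra.
From mathcomp Require Import zify ring.
Import Order.TTheory GRing.Theory Num.Theory.
Local Open Scope ring_scope.
Set Implicit Arguments. Unset Strict Implicit.

Section S.
Variable C : numClosedFieldType.

Lemma adjM m n p (A : 'M[C]_(m, n)) (B : 'M[C]_(n, p)) :
  mxadj (A *m B) = mxadj B *m mxadj A.
Proof. by rewrite /mxadj map_mxM trmx_mul. Qed.

Lemma adjK m n (A : 'M[C]_(m, n)) : mxadj (mxadj A) = A.
Proof. by apply/matrixP=> i j; rewrite /mxadj !mxE conjCK. Qed.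

Lemma charpoly_sim n (A P Q : 'M[C]_n) : Q *m P = 1%:M ->
  char_poly (P *m A *m Q) = char_poly A.
Proof.
move=> QP; have PQ := mulmx1C QP.
rewrite /char_poly.
have -> : char_poly_mx (P *m A *m Q) = map_mx polyC P *m char_poly_mx A *m map_mx polyC Q.
  rewrite /char_poly_mx mulmxBr mulmxBl !map_mxM.
  by congr (_ - _); rewrite scalar_mxC -mulmxA -map_mxM PQ map_mx1 mulmx1.
rewrite (det_mulmx (_ *m _)). rewrite det_mulmx mulrC mulrA -det_mulmx -map_mxM QP map_mx1 det1 mul1r //.
Qed.

Lemma charpoly_tr n (A : 'M[C]_n) : char_poly A^T = char_poly A.
Proof.
rewrite /char_poly -det_tr; congr (\det _).
by apply/matrixP=> i j; rewrite !mxE eq_sym.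
Qed.

Lemma gramE m n p (A : 'M[C]_(m, n)) (B : 'M[C]_(m, p)) i j :
  (mxadj A *m B) i j = (mxadj (col i A) *m col j B) 0 0.
Proof. by rewrite !mxE; apply: eq_bigr => k _; rewrite !mxE. Qed.


Lemma rank_one n (r : 'I_n -> nat) : (\sum_i r i <= n)%N -> (forall i, 0 < r i)%N ->
  forall i, r i = 1%N.
Proof.
move=> hs hp i.
have : (\sum_(j < n) 1 <= \sum_j r j)%N by apply: leq_sum.
rewrite sum1_card card_ord => h.
have e : (\sum_j r j = n)%N by apply/eqP; rewrite eqn_leq hs h.
move: e; rewrite (bigD1 i) //= => e.
have : (\sum_(j < n | j != i) 1 <= \sum_(j < n | j != i) r j)%N by apply: leq_sum.
rewrite sum1_card cardC1 card_ord.
move: e; set S := (\sum_(j < n | j != i) r j)%N =>  e; have := hp i; have := ltn_ord i; lia.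
Qed.

Lemma eig_rank1 n (g : 'M[C]_n) (mu : 'I_n -> C) (w : 'I_n -> 'rV[C]_n) :
  injective mu -> (forall i, w i != 0) -> (forall i, w i *m g = mu i *: w i) ->
  forall i, \rank (eigenspace g (mu i)) = 1%N.
Proof.
move=> imu nz hw; apply: rank_one.
  have := mxdirect_sum_eigenspace g (P := predT) (a_ := mu) (in2W imu).
  rewrite mxdirectE /= => /eqP <-; exact: rank_leq_col.
move=> i; apply: (@leq_trans (\rank (w i))).
  by rewrite lt0n mxrank_eq0 nz.
by apply: mxrankS; apply/eigenspaceP; apply: hw.
Qed.


Lemma adjZ m n (a : C) (A : 'M[C]_(m, n)) : mxadj (a *: A) = Num.conj a *: mxadj A.
Proof. by apply/matrixP=> i j; rewrite /mxadj !mxE rmorphM. Qed.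

Lemma adj_conj m n (A : 'M[C]_(m, n)) :
  mxadj (map_mx Num.conj A) = map_mx Num.conj (mxadj A).
Proof. by apply/matrixP=> i j; rewrite /mxadj !mxE. Qed.

Lemma diag_entry n (d e : 'rV[C]_n) (M : 'M[C]_n) i j :
  (diag_mx d *m M *m diag_mx e) i j = d 0 i * M i j * e 0 j.
Proof. by rewrite mul_mx_diag mul_diag_mx !mxE. Qed.

End S.

Theorem corollary1 (C : numClosedFieldType) (n : nat) (T U V : 'M[C]_n)
    (lambda : 'I_n -> C) :
  injective lambda ->
  (forall i : 'I_n, unit_col U i /\ T *m col i U = lambda i *: col i U) ->
  (forall i : 'I_n, unit_col V i /\
     mxadj T *m col i V = Num.conj (lambda i) *: col i V) ->
  (exists S : 'M[C]_n, csymmetric S /\ unitarily_equiv T S) ->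
  char_poly (mxadj U *m U) = char_poly (mxadj V *m V).
Proof.
move=> inj hU hV [S [hS [W [hW hT]]]].
have WW : W *m mxadj W = 1%:M := mulmx1C hW.
have WT : W *m T = S *m W by rewrite hT !mulmxA WW mul1mx.
have aS : mxadj S = map_mx Num.conj S by rewrite /mxadj map_trmx hS.
have adjT : mxadj T = mxadj W *m map_mx Num.conj S *m W.
  by rewrite hT !adjM adjK aS mulmxA.
pose Cop (x : 'cV[C]_n) := mxadj W *m map_mx Num.conj (W *m x).
have CT : forall x l, T *m x = l *: x ->
    mxadj T *m Cop x = Num.conj l *: Cop x.
  move=> x l hx; rewrite adjT /Cop -!mulmxA (mulmxA W) WW mul1mx.
  by rewrite -map_mxM mulmxA -WT -mulmxA hx -scalemxAr map_mxZ scalemxAr.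
have Cip : forall x y : 'cV[C]_n,
    mxadj (Cop x) *m Cop y = map_mx Num.conj (mxadj x *m y).
  move=> x y; rewrite /Cop adjM adjK -mulmxA (mulmxA W) WW mul1mx.
  have -> : mxadj x *m y = mxadj (W *m x) *m (W *m y).
    by rewrite adjM mulmxA -(mulmxA _ (mxadj W)) hW mulmx1.
  by rewrite [RHS]map_mxM -adj_conj.
have ipV : forall i, (mxadj (col i V) *m col i V) 0 0 = 1.
  move=> i; have := (hV i).1; rewrite /unit_col => <-; rewrite !mxE.
  by apply: eq_bigr => k _; rewrite !mxE normCKC.
have ipU : forall i, (mxadj (col i U) *m col i U) 0 0 = 1.
  move=> i; have := (hU i).1; rewrite /unit_col => <-; rewrite !mxE.
  by apply: eq_bigr => k _; rewrite !mxE normCKC.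
pose g := map_mx (@Num.conj C) T.
have trE : forall (x : 'cV[C]_n) l, mxadj T *m x = l *: x -> x^T *m g = l *: x^T.
  move=> x l e; have := congr1 trmx e; rewrite trmx_mul /mxadj trmxK => ->.
  by apply/matrixP=> a b; rewrite !mxE.
have injc : injective (fun i => Num.conj (lambda i)).
  by move=> i j e; apply: inj; exact: (can_inj (@conjCK C) e).
have nzV : forall i, (col i V)^T != 0.
  move=> i; apply/eqP=> e; have := ipV i.
  rewrite -[col i V]trmxK e !mxE big1 => [/esym/eqP|k _]; first by rewrite oner_eq0.
  by rewrite !mxE mulr0.
have rk1 := eig_rank1 injc nzV (fun i => trE _ _ (hV i).2).
have : forall i, exists a, Cop (col i U) = a *: col i V.
  move=> i.
  have yE : ((Cop (col i U))^T <= eigenspace g (Num.conj (lambda i)))%MS.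
    by apply/eigenspaceP; apply: trE; apply: CT; exact: (hU i).2.
  have wE : ((col i V)^T <= eigenspace g (Num.conj (lambda i)))%MS.
    by apply/eigenspaceP; apply: trE; exact: (hV i).2.
  have := (mxrank_leqif_eq wE).2; rewrite rk1 rank_rV nzV eqxx.
  move=> /esym/andP[_ Ew].
  have /sub_rVP[a ea] := submx_trans yE Ew.
  exists a; apply: trmx_inj; rewrite ea; apply/matrixP=> p q; rewrite !mxE //.
case/fin_all_exists=> a ha.
have ua : forall i, Num.conj (a i) * a i = 1.
  move=> i; have := congr1 (fun M : 'M[C]_1 => M 0 0) (Cip (col i U) (col i U)).
  rewrite ha adjZ -scalemxAl -scalemxAr /=.
  by rewrite [X in X = _ -> _]mxE [X in _ * X = _ -> _]mxE ipV mulr1 [X in _ = X -> _]mxE ipU rmorph1 => ->.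

have key : forall i j, Num.conj (a i) * a j * (mxadj V *m V) i j
    = Num.conj ((mxadj U *m U) i j).
  move=> i j; rewrite (gramE V V) (gramE U U).
  have := congr1 (fun M : 'M[C]_1 => M 0 0) (Cip (col i U) (col j U)).
  rewrite !ha adjZ -scalemxAl -scalemxAr /=.
  rewrite [X in X = _ -> _]mxE [X in _ * X = _ -> _]mxE [X in _ = X -> _]mxE.
  by rewrite mulrA.
have herm : forall i j, (mxadj U *m U) j i = Num.conj ((mxadj U *m U) i j).
  move=> i j; rewrite !mxE rmorph_sum; apply: eq_bigr => k _.
  by rewrite /mxadj !mxE rmorphM /= conjCK mulrC.
pose P := diag_mx (\row_i a i).
pose Q := diag_mx (\row_i Num.conj (a i)).
move: (mxadj U *m U) (mxadj V *m V) herm key => MU MV herm key.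
have -> : MV = P *m MU^T *m Q.
  apply/matrixP=> i j; rewrite diag_entry !mxE herm -key.
  transitivity ((Num.conj (a i) * a i) * (Num.conj (a j) * a j) * MV i j).
    by rewrite !ua !mul1r.
  ring.
rewrite charpoly_sim ?charpoly_tr //.
apply/matrixP=> i j; rewrite mul_diag_mx !mxE.
by case: eqVneq => [->|_]; rewrite ?mulr1n ?mulr0n ?mulr0 // ua.
Qed.
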